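(* Let $n\geq 2$ be an integer and let $f:\mathbb{R}\to\mathbb{R}$ be the continuous function which equals $1$ on $[\frac{1}{n},1-\frac{1}{n}]$, equals $-1$ on $[-1+\frac{1}{n},-\frac{1}{n}]$, equals $0$ for $|t|\geq 1$, and is linear on each of the intervals $[-1,-1+\frac{1}{n}]$, $[-\frac{1}{n},\frac{1}{n}]$ and $[1-\frac{1}{n},1]$. For a positive integer $k$ let $\phi_k(x)=c_k\left(1-\frac{x^2}{4}\right)^{k^2}$, where $c_k>0$ is chosen so that $\int_{-2}^2\phi_k(x)\,dx=1$, and let $P_k(t)=\int_{-1}^1 f(x)\phi_k(t-x)\,dx$ for $t\in\mathbb{R}$. Then: (i) $P_k$ is an odd polynomial of degree $2k^2-1$ with leading coefficient $$a_k=(-1)^{k^2+1}\frac{2c_k k^2}{4^{k^2}}\Big(1-\frac{1}{n}\Big),$$ i.e. $P_k(t)=a_k t^{2k^2-1}+(\text{lower order terms})$. (ii) There is an absolute constant $c>0$ (independent of $k$ and $n$) such that for all $t\in\mathbb{R}$, $$|P_k^{(2k^2-1)}(t)|\geq c\,(2k^2-1)!\,\frac{k^3}{4^{k^2}}.$$ (iii) For every $t\in[-1,1]$, $$P_k(t)=\int_0^2 \big(f(t+x)+f(t-x)\big)\phi_k(x)\,dx.$$ *)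

(* Defs.v *)
From Stdlib Require Import Reals Lra Arith Factorial.
From Coquelicot Require Import Coquelicot.
Open Scope R_scope.

Definition trap (n : nat) (t : R) : R :=
  let m := INR n in
  if Rle_dec 1 (Rabs t) then 0
  else if Rle_dec (1 - 1 / m) t then m * (1 - t)
  else if Rle_dec (1 / m) t then 1
  else if Rle_dec (- (1 / m)) t then m * t
  else if Rle_dec (-1 + 1 / m) t then -1
  else - m * (1 + t).

Definition ck (k : nat) : R :=
  / RInt (fun x => (1 - x ^ 2 / 4) ^ (k * k)) (-2) 2.

Definition phik (k : nat) (x : R) : R := ck k * (1 - x ^ 2 / 4) ^ (k * k).

Definition Pk (n k : nat) (t : R) : R :=
  RInt (fun x => trap n x * phik k (t - x)) (-1) 1.

Definition ak (n k : nat) : R :=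
  (-1) ^ (k * k + 1) * (2 * ck k * INR (k * k) / 4 ^ (k * k)) * (1 - 1 / INR n).

(* Main.v *)
Require Import Defs.
From Stdlib Require Import Reals Arith Factorial.
From Coquelicot Require Import Coquelicot.
From Stdlib Require Import Lra Psatz.
From Stdlib Require Import ssreflect.
Open Scope R_scope.

Definition G (m t : R) := Rmax 0 (Rmin (Rmin (m*t) 1) (m*(1-t))).

Lemma trap_G n t : (2 <= n)%nat -> trap n t = G (INR n) t - G (INR n) (-t).
Proof.
  intros Hn. assert (Hm : 2 <= INR n) by (replace 2 with (INR 2) by (simpl; lra); apply le_INR; lia).
  set (m := INR n) in *.
  assert (Hu : m * (1/m) = 1) by (field; lra).
  assert (Hu0 : 0 < 1/m <= 1/2).
  { split. apply Rdiv_lt_0_compat; lra. apply Rmult_le_reg_l with m; lra. }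
  set (u := 1/m) in *.
  unfold trap, G. fold m. fold u.
  unfold Rmax, Rmin, Rabs.
  repeat match goal with
  | |- context [Rcase_abs ?a] => destruct (Rcase_abs a)
  | H : context [Rcase_abs ?a] |- _ => destruct (Rcase_abs a)
  | |- context [Rle_dec ?a ?b] => destruct (Rle_dec a b)
  | H : context [Rle_dec ?a ?b] |- _ => destruct (Rle_dec a b) end;
  try nra.
Qed.

Lemma Rmax_abs a b : Rmax a b = (a + b + Rabs (a - b)) / 2.
Proof. unfold Rmax, Rabs; destruct (Rle_dec a b); destruct (Rcase_abs (a-b)); lra. Qed.
Lemma Rmin_abs a b : Rmin a b = (a + b - Rabs (a - b)) / 2.
Proof. unfold Rmin, Rabs; destruct (Rle_dec a b); destruct (Rcase_abs (a-b)); lra. Qed.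

Lemma cont_Rmax (f g : R -> R) x : continuous f x -> continuous g x ->
  continuous (fun y => Rmax (f y) (g y)) x.
Proof.
  intros Hf Hg.
  apply continuous_ext with (fun y => (f y + g y + Rabs (f y - g y)) / 2).
  intros; rewrite Rmax_abs; auto.
  apply (continuous_mult (fun y => (f y + g y + Rabs (f y - g y))) (fun _ => /2)).
  apply (continuous_plus (fun y => f y + g y) (fun y => Rabs (f y - g y))).
  apply (continuous_plus f g); auto.
  apply continuous_Rabs_comp.
  apply (continuous_plus f (fun y => - g y)); auto.
  apply (continuous_opp g); auto.
  apply continuous_const.
Qed.

Lemma cont_Rmin (f g : R -> R) x : continuous f x -> continuous g x ->
  continuous (fun y => Rmin (f y) (g y)) x.
Proof.
  intros Hf Hg.
  apply continuous_ext with (fun y => (f y + g y + - Rabs (f y - g y)) / 2).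
  intros; rewrite Rmin_abs; unfold Rminus; auto.
  apply (continuous_mult (fun y => (f y + g y + - Rabs (f y - g y))) (fun _ => /2)).
  apply (continuous_plus (fun y => f y + g y) (fun y => - Rabs (f y - g y))).
  apply (continuous_plus f g); auto.
  apply (continuous_opp (fun y => Rabs (f y - g y))).
  apply continuous_Rabs_comp.
  apply (continuous_plus f (fun y => - g y)); auto.
  apply (continuous_opp g); auto.
  apply continuous_const.
Qed.

Lemma cont_poly (f : R -> R) x : ex_derive f x -> continuous f x.
Proof. intros H; apply: (ex_derive_continuous f x H). Qed.

Lemma cont_G m x : continuous (G m) x.
Proof.
  unfold G. apply cont_Rmax. apply continuous_const.
  apply cont_Rmin. apply cont_Rmin.
  apply cont_poly; auto_derive; auto. apply continuous_const.
  apply cont_poly; auto_derive; auto.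
Qed.

Lemma cont_trap n x : (2 <= n)%nat -> continuous (trap n) x.
Proof.
  intros Hn. apply continuous_ext with (fun t => G (INR n) t + - G (INR n) (-t)).
  intros; rewrite trap_G; auto.
  apply (continuous_plus (G (INR n)) (fun t => - G (INR n) (-t))). apply cont_G.
  apply (continuous_opp (fun t => G (INR n) (-t))).
  apply (continuous_comp (fun t => - t) (G (INR n))).
  apply cont_poly; auto_derive; auto. apply cont_G.
Qed.

Lemma trap_odd n t : (2 <= n)%nat -> trap n (-t) = - trap n t.
Proof. intros Hn; rewrite !trap_G; auto. rewrite Ropp_involutive; ring. Qed.


Fixpoint qf (m : nat) (i : nat) (x : R) : R :=
  match m with
  | O => match i with O => 1 | _ => 0 end
  | S m' => -1/4 * (match i with S (S j) => qf m' j x | _ => 0 end)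
          + x/2 * (match i with S j => qf m' j x | O => 0 end)
          + (1 - x^2/4) * qf m' i x
  end.

Lemma qf_zero m : forall i x, (2*m < i)%nat -> qf m i x = 0.
Proof.
  induction m as [|m IH]; intros i x Hi.
  - destruct i; simpl; [lia|reflexivity].
  - simpl. destruct i as [|[|i]]; try lia.
    rewrite !IH; try lia. field.
Qed.

Lemma qf_top m x : qf m (2*m) x = (-1/4)^m.
Proof.
  induction m as [|m IH].
  - reflexivity.
  - replace (2 * S m)%nat with (S (S (2*m))) by lia. simpl qf.
    rewrite IH !qf_zero; try lia. simpl. field.
Qed.

Lemma qf_sub m x : qf (S m) (S (2*m)) x = INR (S m) * (-1/4)^m * (x/2).
Proof.
  induction m as [|m IH].
  - simpl. field.
  - replace (S (2 * S m))%nat with (S (S (S (2*m)))) by lia.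
    change (qf (S (S m)) (S (S (S (2 * m)))) x) with
      (-1/4 * qf (S m) (S (2*m)) x + x/2 * qf (S m) (S (S (2*m))) x
       + (1 - x^2/4) * qf (S m) (S (S (S (2*m)))) x).
    rewrite IH. replace (S (S (2*m))) with (2 * S m)%nat by lia.
    rewrite qf_top qf_zero; try lia.
    rewrite !S_INR. simpl. field.
Qed.

Lemma sum_ext (f g : nat -> R) n : (forall i, f i = g i) -> sum_f_R0 f n = sum_f_R0 g n.
Proof. intros H; induction n; simpl; rewrite ?IHn H; auto. Qed.

Lemma sum_S (f : nat -> R) n : sum_f_R0 f (S n) = sum_f_R0 f n + f (S n).
Proof. reflexivity. Qed.

Lemma sum_shift (f : nat -> R) n : sum_f_R0 f (S n) = f O + sum_f_R0 (fun i => f (S i)) n.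
Proof. induction n; simpl in *. field. rewrite IHn. field. Qed.

Lemma sum_scal (f : nat -> R) a n : sum_f_R0 (fun i => a * f i) n = a * sum_f_R0 f n.
Proof. induction n; simpl; rewrite ?IHn; field. Qed.

Lemma sum_add (f g : nat -> R) n : sum_f_R0 (fun i => f i + g i) n = sum_f_R0 f n + sum_f_R0 g n.
Proof. induction n; simpl; rewrite ?IHn; field. Qed.

Lemma qf_expand m t x : (1 - (t - x)^2/4)^m = sum_f_R0 (fun i => qf m i x * t^i) (2*m).
Proof.
  induction m as [|m IH].
  - simpl. field.
  - set Q := sum_f_R0 (fun i => qf m i x * t^i) (2*m).
    replace (2 * S m)%nat with (S (S (2*m))) by lia.
    rewrite (sum_ext _ (fun i => -1/4 * ((match i with S (S j) => qf m j x | _ => 0 end) * t^i)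
       + x/2 * ((match i with S j => qf m j x | O => 0 end) * t^i) + (1 - x^2/4) * (qf m i x * t^i))); last first.
    { intros i. destruct i as [|[|i]]; simpl qf; field. }
    rewrite !sum_add !sum_scal.
    have -> : sum_f_R0 (fun i => qf m i x * t ^ i) (S (S (2 * m))) = Q.
    { rewrite !sum_S !qf_zero; try lia. rewrite /Q. field. }
    have -> : sum_f_R0 (fun i => (match i with S j => qf m j x | O => 0 end) * t ^ i) (S (S (2 * m))) = t * Q.
    { rewrite sum_shift sum_S.
      rewrite (qf_zero m (S (2*m))); try lia.
      rewrite /Q -sum_scal. rewrite (sum_ext _ (fun i => t * (qf m i x * t^i))).
      lra. intros; simpl; ring. }
    have -> : sum_f_R0 (fun i => (match i with S (S j) => qf m j x | _ => 0 end) * t ^ i) (S (S (2 * m))) = t^2 * Q.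
    { rewrite sum_shift sum_shift.
      rewrite /Q -sum_scal. rewrite (sum_ext _ (fun i => t^2 * (qf m i x * t^i))).
      lra. intros; simpl; ring. }
    rewrite /= IH -/Q. field.
Qed.

Lemma cont_qstep (u v w : R -> R) x : continuous u x -> continuous v x -> continuous w x ->
  continuous (fun y => -1/4 * u y + y/2 * v y + (1 - y^2/4) * w y) x.
Proof.
  intros Hu Hv Hw.
  have Hp : forall (f : R -> R), ex_derive f x -> continuous f x.
  { intros f H; apply: (ex_derive_continuous f x H). }
  apply (continuous_plus (fun y => -1/4 * u y + y/2 * v y) (fun y => (1 - y^2/4) * w y)).
  apply (continuous_plus (fun y => -1/4 * u y) (fun y => y/2 * v y)).
  apply (continuous_mult (fun _ => -1/4) u); auto. apply continuous_const.
  apply (continuous_mult (fun y => y/2) v); auto. apply Hp; auto_derive; auto.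
  apply (continuous_mult (fun y => 1 - y^2/4) w); auto. apply Hp; auto_derive; auto.
Qed.

Lemma cont_qf m : forall i x, continuous (qf m i) x.
Proof.
  induction m as [|m IH]; intros i x.
  - destruct i; apply continuous_const.
  - destruct i as [|[|i]]; simpl;
    apply (cont_qstep (fun y => _) (fun y => _) (fun y => _)); try apply IH; apply continuous_const.
Qed.


Lemma RInt_sum (g : nat -> R -> R) a b N : (forall i, ex_RInt (g i) a b) ->
  ex_RInt (fun x => sum_f_R0 (fun i => g i x) N) a b /\
  RInt (fun x => sum_f_R0 (fun i => g i x) N) a b = sum_f_R0 (fun i => RInt (g i) a b) N.
Proof.
  intros H. induction N as [|N [IH1 IH2]].
  - simpl. split. apply (ex_RInt_ext (g O)). auto. auto. apply RInt_ext. auto.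
  - simpl. split.
    + apply: (ex_RInt_plus (fun x => sum_f_R0 (fun i => g i x) N) (g (S N))); auto.
    + have E := RInt_plus (fun x => sum_f_R0 (fun i => g i x) N) (g (S N)) a b IH1 (H (S N)).
      rewrite -IH2. exact E.
Qed.

Lemma RInt_mulr (f : R -> R) c a b : ex_RInt f a b -> RInt (fun x => f x * c) a b = RInt f a b * c.
Proof.
  intros H. have E := RInt_scal f a b c H. rewrite /scal /= /mult /= in E.
  rewrite Rmult_comm -E. apply RInt_ext. intros; apply Rmult_comm.
Qed.


Lemma exRc (f : R -> R) a b : (forall z, Rmin a b <= z <= Rmax a b -> continuous f z) -> ex_RInt f a b.
Proof. intros H. apply: (ex_RInt_continuous f a b H). Qed.

Lemma cont_tr n (h : R -> R) c x : (2 <= n)%nat -> (forall y, continuous h y) ->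
  continuous (fun y => c * (trap n y * h y)) x.
Proof.
  intros Hn Hh.
  apply (continuous_mult (fun _ => c) (fun y => trap n y * h y)). apply continuous_const.
  apply (continuous_mult (trap n) h). apply cont_trap; auto. auto.
Qed.

Lemma cont_phik k y : continuous (phik k) y.
Proof. apply: (ex_derive_continuous (phik k) y). unfold phik. auto_derive. auto. Qed.

Definition bcoef n k i := RInt (fun x => ck k * (trap n x * qf (k*k) i x)) (-1) 1.

Lemma Pk_poly n k t : (2 <= n)%nat ->
  Pk n k t = sum_f_R0 (fun i => bcoef n k i * t^i) (2*(k*k)).
Proof.
  intros Hn. unfold Pk.
  rewrite (RInt_ext _ (fun x => sum_f_R0 (fun i => ck k * (trap n x * qf (k*k) i x) * t^i) (2*(k*k)))); last first.
  { intros x _. rewrite /phik qf_expand -!sum_scal. apply sum_ext. intros; ring. }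
  have Hex : forall i, ex_RInt (fun x => ck k * (trap n x * qf (k*k) i x)) (-1) 1.
  { intros i. apply exRc. intros z _. apply cont_tr; auto. apply cont_qf. }
  destruct (RInt_sum (fun i x => ck k * (trap n x * qf (k*k) i x) * t^i) (-1) 1 (2*(k*k))) as [_ E].
  { intros i. apply exRc. intros z _.
    apply (continuous_mult (fun x => ck k * (trap n x * qf (k*k) i x)) (fun _ => t^i)).
    apply cont_tr; auto. apply cont_qf. apply continuous_const. }
  rewrite E. apply sum_ext. intros i. rewrite /bcoef. apply RInt_mulr. auto.
Qed.

Lemma Pk_odd n k t : (2 <= n)%nat -> Pk n k (-t) = - Pk n k t.
Proof.
  intros Hn. unfold Pk.
  set F := fun x => trap n x * phik k (- t - x).
  have HF : forall a b, ex_RInt F a b.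
  { intros a b. apply exRc. intros z _. rewrite /F.
    apply (continuous_mult (trap n) (fun x => phik k (-t - x))). apply cont_trap; auto.
    apply (continuous_comp (fun x => -t - x) (phik k)).
    apply: (ex_derive_continuous (fun x => -t - x)). auto_derive; auto. apply cont_phik. }
  have E := RInt_comp_lin F (-1) 0 1 (-1).
  replace (-1 * 1 + 0) with (-1) in E by ring. replace (-1 * -1 + 0) with 1 in E by ring.
  rewrite -E; auto.
  set G := fun x => trap n x * phik k (t - x).
  rewrite (RInt_ext _ G); last first.
  { intros x _. rewrite /F /G /scal /= /mult /=. replace (-1 * x + 0) with (-x) by ring.
    rewrite trap_odd; auto. rewrite /phik. replace (- t - - x) with (-(t-x)) by ring.
    replace ((- (t - x)) ^ 2) with ((t-x)^2) by ring. ring. }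
  have Hg : ex_RInt G (-1) 1.
  { apply exRc. intros z _. rewrite /G.
    apply (continuous_mult (trap n) (fun x => phik k (t - x))). apply cont_trap; auto.
    apply (continuous_comp (fun x => t - x) (phik k)).
    apply: (ex_derive_continuous (fun x => t - x)). auto_derive; auto. apply cont_phik. }
  rewrite -(opp_RInt_swap G (-1) 1 Hg). reflexivity.
Qed.


Lemma RInt_poly2 a b c0 c1 c2 :
  RInt (fun x => c0 + c1*x + c2*x^2) a b = c0*(b-a) + c1*(b^2-a^2)/2 + c2*(b^3-a^3)/3.
Proof.
  have H := is_RInt_derive (fun x => c0*x + c1*x^2/2 + c2*x^3/3) (fun x => c0 + c1*x + c2*x^2) a b.
  rewrite (is_RInt_unique _ _ _ _ (H _ _)).
  - rewrite /minus /plus /opp /=. field.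
  - intros x _. auto_derive; auto. field.
  - intros x _. apply: (ex_derive_continuous (fun x => c0 + c1*x + c2*x^2)). auto_derive; auto.
Qed.

Ltac trap_tac n Hn :=
  let Hm := fresh in let Hu := fresh in let Hu0 := fresh in
  assert (Hm : 2 <= INR n) by (replace 2 with (INR 2) by (simpl; lra); apply le_INR; exact Hn);
  unfold trap; set (m := INR n) in *;
  assert (Hu : m * (1/m) = 1) by (field; lra);
  assert (Hu0 : 0 < 1/m <= 1/2) by (split; [apply Rdiv_lt_0_compat; lra | apply Rmult_le_reg_l with m; lra]);
  set (u := 1/m) in *;
  unfold Rabs;
  repeat match goal with
  | |- context [Rcase_abs ?a] => destruct (Rcase_abs a)
  | H : context [Rcase_abs ?a] |- _ => destruct (Rcase_abs a)
  | |- context [Rle_dec ?a ?b] => destruct (Rle_dec a b)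
  | H : context [Rle_dec ?a ?b] |- _ => destruct (Rle_dec a b) end;
  try nra.

Section Pieces.
Variable n : nat.
Hypothesis Hn : (2 <= n)%nat.
Let mm := INR n.

Lemma tp1 x : -1 < x < -1 + 1/mm -> trap n x = - mm * (1 + x).
Proof. intros Hx. unfold mm in *. trap_tac n Hn. Qed.
Lemma tp2 x : -1 + 1/mm < x < - (1/mm) -> trap n x = -1.
Proof. intros Hx. unfold mm in *. trap_tac n Hn. Qed.
Lemma tp3 x : - (1/mm) < x < 1/mm -> trap n x = mm * x.
Proof. intros Hx. unfold mm in *. trap_tac n Hn. Qed.
Lemma tp4 x : 1/mm < x < 1 - 1/mm -> trap n x = 1.
Proof. intros Hx. unfold mm in *. trap_tac n Hn. Qed.
Lemma tp5 x : 1 - 1/mm < x < 1 -> trap n x = mm * (1 - x).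
Proof. intros Hx. unfold mm in *. trap_tac n Hn. Qed.
End Pieces.

Lemma piece (h : R -> R) a b c0 c1 c2 : a <= b ->
  (forall x, a < x < b -> h x = c0 + c1*x + c2*x^2) ->
  RInt h a b = c0*(b-a) + c1*(b^2-a^2)/2 + c2*(b^3-a^3)/3.
Proof.
  intros Hab H. rewrite -RInt_poly2. apply RInt_ext.
  rewrite Rmin_left // Rmax_right //.
Qed.

Lemma int_xtrap n : (2 <= n)%nat -> RInt (fun x => x * trap n x) (-1) 1 = 1 - 1 / INR n.
Proof.
  intros Hn.
  assert (Hm : 2 <= INR n) by (replace 2 with (INR 2) by (simpl; lra); apply le_INR; exact Hn).
  assert (Hu0 : 0 < 1/INR n <= 1/2).
  { split. apply Rdiv_lt_0_compat; lra. unfold Rdiv; rewrite !Rmult_1_l; apply Rinv_le_contravar; lra. }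
  set h := fun x => x * trap n x.
  have Hh : forall a b, ex_RInt h a b.
  { intros a b. apply exRc. intros z _. rewrite /h.
    apply (continuous_mult (fun x => x) (trap n)). apply continuous_id. apply cont_trap; auto. }
  set u := 1 / INR n in Hu0 *.
  rewrite -(RInt_Chasles h (-1) (-1+u) 1) // -(RInt_Chasles h (-1+u) (-u) 1) //
     -(RInt_Chasles h (-u) u 1) // -(RInt_Chasles h u (1-u) 1) //.
  rewrite (piece h (-1) (-1+u) 0 (- INR n) (- INR n)); [| lra | intros x Hx; rewrite /h tp1 //; ring].
  rewrite (piece h (-1+u) (-u) 0 (-1) 0); [| lra | intros x Hx; rewrite /h tp2 //; ring].
  rewrite (piece h (-u) u 0 0 (INR n)); [| lra | intros x Hx; rewrite /h tp3 //; ring].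
  rewrite (piece h u (1-u) 0 1 0); [| lra | intros x Hx; rewrite /h tp4 //; ring].
  rewrite (piece h (1-u) 1 0 (INR n) (- INR n)); [| lra | intros x Hx; rewrite /h tp5 //; ring].
  rewrite /plus /= /u. field. lra.
Qed.

Lemma ck_int_pos k : 0 < RInt (fun x => (1 - x ^ 2 / 4) ^ (k * k)) (-2) 2.
Proof.
  have H := RInt_lt (fun _ => 0) (fun x => (1 - x ^ 2 / 4) ^ (k * k)) (-2) 2.
  rewrite RInt_const /scal /= /mult /= Rmult_0_r in H. apply H.
  - lra.
  - intros x _. apply: (ex_derive_continuous (fun x => (1 - x ^ 2 / 4) ^ (k * k))). auto_derive; auto.
  - intros x _. apply continuous_const.
  - intros x Hx. apply pow_lt. nra.
Qed.

Lemma ck_pos k : 0 < ck k.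
Proof. unfold ck. apply Rinv_0_lt_compat, ck_int_pos. Qed.

Lemma sum_minus (f g : nat -> R) n : sum_f_R0 f n - sum_f_R0 g n = sum_f_R0 (fun i => f i - g i) n.
Proof. induction n; simpl; rewrite -?IHn; ring. Qed.

Lemma pow_opp t i : (-t)^i = (-1)^i * t^i.
Proof. replace (-t) with (-1 * t) by ring. apply Rpow_mult_distr. Qed.

Lemma bcoef_top n k : (2 <= n)%nat -> (1 <= k)%nat -> bcoef n k (2*(k*k) - 1) = ak n k.
Proof.
  intros Hn Hk. destruct (k*k)%nat as [|K'] eqn:EK.
  { destruct k; [lia|]. simpl in EK. lia. }
  replace (2 * S K' - 1)%nat with (S (2*K')) by lia.
  rewrite /bcoef EK.
  rewrite (RInt_ext _ (fun x => (x * trap n x) * (ck k * INR (S K') * (-1/4)^K' / 2))); last first.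
  { intros x _. rewrite qf_sub. generalize ((-1/4)^K') (INR (S K')) (trap n x); intros; match goal with |- ?a = ?b => change (@eq R a b) end; field. }
  rewrite RInt_mulr; last first.
  { apply exRc. intros z _. apply (continuous_mult (fun x => x) (trap n)). apply continuous_id. apply cont_trap; auto. }
  rewrite int_xtrap // /ak EK.
  replace (-1/4) with (-1 * / 4) by field. rewrite Rpow_mult_distr pow_inv.
  replace (S K' + 1)%nat with (S (S K')) by lia. simpl pow.
  match goal with |- ?a = ?b => change (@eq R a b) end.
  assert (2 <= INR n) by (replace 2 with (INR 2) by (simpl; lra); apply le_INR; exact Hn).
  field. repeat split; try (apply pow_nonzero; lra); lra.
Qed.

Lemma ak_nz n k : (2 <= n)%nat -> (1 <= k)%nat -> ak n k <> 0.
Proof.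
  intros Hn Hk. assert (2 <= INR n) by (replace 2 with (INR 2) by (simpl; lra); apply le_INR; exact Hn).
  have Hc := ck_pos k.
  assert (HK : 1 <= INR (k*k)) by (replace 1 with (INR 1) by (simpl; lra); apply le_INR; nia).
  unfold ak. apply Rmult_integral_contrapositive_currified.
  apply Rmult_integral_contrapositive_currified. apply pow_nonzero; lra.
  apply Rgt_not_eq. apply Rdiv_lt_0_compat. nra. apply pow_lt; lra.
  assert (1 / INR n <= 1/2). { unfold Rdiv; rewrite !Rmult_1_l; apply Rinv_le_contravar; lra. } lra.
Qed.

Definition coefP n k i := bcoef n k i * (1 - (-1)^i) / 2.

Lemma part_i n k : (2 <= n)%nat -> (1 <= k)%nat ->
     coefP n k (2 * (k * k) - 1)%nat = ak n k /\
        ak n k <> 0 /\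
        (forall i : nat, Nat.Even i -> coefP n k i = 0) /\
        (forall t : R, Pk n k t = sum_f_R0 (fun i => coefP n k i * t ^ i) (2 * (k * k) - 1)).
Proof.
  intros Hn Hk.
  have Hev : forall i : nat, Nat.Even i -> coefP n k i = 0.
  { intros i [j ->]. rewrite /coefP pow_1_even. field. }
  split; [|split; [|split]].
  - rewrite /coefP. replace (2 * (k*k) - 1)%nat with (S (2 * (k*k - 1))) by nia.
    rewrite pow_1_odd. replace (S (2 * (k*k - 1))) with (2 * (k*k) - 1)%nat by nia.
    rewrite bcoef_top //. field.
  - apply ak_nz; auto.
  - exact Hev.
  - intros t.
    replace (Pk n k t) with ((Pk n k t - Pk n k (-t)) / 2) by (rewrite Pk_odd //; field).
    rewrite !Pk_poly // sum_minus.
    rewrite /Rdiv Rmult_comm -sum_scal.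
    rewrite (sum_ext _ (fun i => coefP n k i * t^i)); last first.
    { intros i. rewrite pow_opp /coefP. field. }
    have E2 : (2*(k*k))%nat = S (2*(k*k)-1) by nia.
    rewrite {1}E2 sum_S Hev. rewrite Rmult_0_l Rplus_0_r; reflexivity.
    exists (k*k)%nat. nia.
Qed.


Ltac fixeq := match goal with |- ?a = ?b => change (@eq R a b) end.

Lemma trap_out n x : 1 <= Rabs x -> trap n x = 0.
Proof. intros H. unfold trap. destruct (Rle_dec 1 (Rabs x)); [reflexivity| contradiction]. Qed.

Lemma phik_even k x : phik k (-x) = phik k x.
Proof. rewrite /phik. f_equal. f_equal. field. Qed.

Lemma part_iii n k t : (2 <= n)%nat -> -1 <= t <= 1 ->
  Pk n k t = RInt (fun x => (trap n (t + x) + trap n (t - x)) * phik k x) 0 2.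
Proof.
  intros Hn Ht.
  set g := fun x => trap n x * phik k (t - x).
  have Hg : forall a b, ex_RInt g a b.
  { intros a b. apply exRc. intros z _. rewrite /g.
    apply (continuous_mult (trap n) (fun x => phik k (t - x))). apply cont_trap; auto.
    apply (continuous_comp (fun x => t - x) (phik k)).
    apply: (ex_derive_continuous (fun x => t - x)). auto_derive; auto. apply cont_phik. }
  have H1 : forall a b, ex_RInt (fun x => trap n (t + x) * phik k x) a b.
  { intros a b. apply exRc. intros z _.
    apply (continuous_mult (fun x => trap n (t + x)) (phik k)).
    apply (continuous_comp (fun x => t + x) (trap n)).
    apply: (ex_derive_continuous (fun x => t + x)). auto_derive; auto. apply cont_trap; auto.
    apply cont_phik. }
  have H2 : forall a b, ex_RInt (fun x => trap n (t - x) * phik k x) a b.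
  { intros a b. apply exRc. intros z _.
    apply (continuous_mult (fun x => trap n (t - x)) (phik k)).
    apply (continuous_comp (fun x => t - x) (trap n)).
    apply: (ex_derive_continuous (fun x => t - x)). auto_derive; auto. apply cont_trap; auto.
    apply cont_phik. }
  rewrite (RInt_ext _ (fun x => plus (trap n (t + x) * phik k x) (trap n (t - x) * phik k x))); last first.
  { intros x _. rewrite /plus /=. fixeq. ring. }
  rewrite RInt_plus //.
  have E1 := RInt_comp_lin g 1 t 0 2 (Hg _ _).
  rewrite (RInt_ext (fun y => scal 1 (g (1 * y + t))) (fun x => trap n (t + x) * phik k x)) in E1; last first.
  { intros x _. rewrite /g /scal /= /mult /=. replace (1 * x + t) with (t + x) by ring.
    replace (t - (t + x)) with (- x) by ring. rewrite phik_even. fixeq. ring. }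
  have E2 := RInt_comp_lin g (-1) t 0 2 (Hg _ _).
  rewrite (RInt_ext (fun y => scal (-1) (g (-1 * y + t))) (fun x => opp (trap n (t - x) * phik k x))) in E2; last first.
  { intros x _. rewrite /g /scal /= /mult /= /opp /=. replace (-1 * x + t) with (t - x) by ring.
    replace (t - (t - x)) with x by ring. fixeq. ring. }
  rewrite RInt_opp in E2; last by apply H2.
  rewrite E1.
  have E3 : RInt (fun x => trap n (t - x) * phik k x) 0 2 = RInt g (-1 * 2 + t) (-1 * 0 + t).
  { rewrite -(opp_RInt_swap g (-1*0+t) (-1*2+t)); last by apply Hg. rewrite -E2 /opp /=. exact (eq_sym (Ropp_involutive _)). }
  rewrite E3.
  replace (-1 * 2 + t) with (t - 2) by ring. replace (-1 * 0 + t) with t by ring.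
  replace (1 * 0 + t) with t by ring. replace (1 * 2 + t) with (t + 2) by ring.
  rewrite plus_comm (RInt_Chasles g (t-2) t (t+2)); try apply Hg.
  rewrite -(RInt_Chasles g (t-2) (-1) (t+2)); try apply Hg.
  rewrite -(RInt_Chasles g (-1) 1 (t+2)); try apply Hg.
  have Z1 : RInt g (t-2) (-1) = 0.
  { rewrite (RInt_ext _ (fun _ => 0)). rewrite RInt_const /scal /= /mult /=. ring.
    intros x. rewrite Rmin_left; [|lra]. rewrite Rmax_right; [|lra]. intros Hx.
    rewrite /g trap_out; [fixeq; ring | rewrite Rabs_left; lra]. }
  have Z2 : RInt g 1 (t+2) = 0.
  { rewrite (RInt_ext _ (fun _ => 0)). rewrite RInt_const /scal /= /mult /=. ring.
    intros x. rewrite Rmin_left; [|lra]. rewrite Rmax_right; [|lra]. intros Hx.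
    rewrite /g trap_out; [fixeq; ring | rewrite Rabs_right; lra]. }
  rewrite /plus /= Z1 Z2. unfold Pk. fold g. rewrite Rplus_0_l Rplus_0_r. reflexivity.
Qed.




Lemma poly_derive (c : nat -> R) d t :
  is_derive (fun x => sum_f_R0 (fun i => c i * x^i) (S d)) t
            (sum_f_R0 (fun i => c (S i) * INR (S i) * t^i) d).
Proof.
  induction d as [|d IH].
  - simpl. auto_derive; auto. simpl. fixeq. ring.
  - have H2 : is_derive (fun x => c (S (S d)) * x^(S (S d))) t (c (S (S d)) * INR (S (S d)) * t^(S d)).
    { have H := is_derive_scal _ t (c (S (S d))) _ (is_derive_pow (fun x => x) (S (S d)) t 1 (is_derive_id t)).
      simpl pred in H. rewrite Rmult_1_r in H. rewrite -Rmult_assoc in H. exact H. }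
    have := is_derive_plus _ _ t _ _ IH H2. apply is_derive_ext. intros; reflexivity.
Qed.

Lemma poly_Derive_n d : forall (c : nat -> R) (f : R -> R),
  (forall t, f t = sum_f_R0 (fun i => c i * t^i) d) ->
  forall t, Derive_n f d t = c d * INR (fact d).
Proof.
  induction d as [|d IH]; intros c f Hf t.
  - simpl. rewrite Hf. simpl. ring.
  - have E := Derive_n_comp f d 1%nat t. rewrite Nat.add_1_r in E. rewrite -E /=.
    rewrite (Derive_n_ext _ (fun x => sum_f_R0 (fun i => c (S i) * INR (S i) * x^i) d)); last first.
    { intros x. rewrite (Derive_ext _ (fun x => sum_f_R0 (fun i => c i * x^i) (S d))); last by auto.
      apply is_derive_unique, poly_derive. }
    rewrite (IH (fun i => c (S i) * INR (S i))) //.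
    rewrite plus_INR mult_INR S_INR. ring.
Qed.

Lemma bern K s : 0 <= s <= 1 -> (1-s)^K * (1 + INR K * s) <= 1.
Proof.
  intros Hs. induction K as [|K IH].
  - simpl. lra.
  - rewrite S_INR /=. have HP : 0 <= (1-s)^K by apply pow_le; lra.
    set P := (1-s)^K in IH HP *.
    assert (0 <= P * s^2 * (INR K + 1)) by (apply Rmult_le_pos; [apply Rmult_le_pos; nra| have := pos_INR K; lra]).
    nra.
Qed.

Lemma int_bound k : (1 <= k)%nat -> RInt (fun x => (1 - x^2/4)^(k*k)) (-2) 2 <= 8 / INR k.
Proof.
  intros Hk. assert (Hk1 : 1 <= INR k) by (replace 1 with (INR 1) by (simpl; lra); apply le_INR; lia).
  apply Rle_trans with (RInt (fun x => / (1 + (INR k * x / 2)^2)) (-2) 2).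
  - apply RInt_le. lra.
    + apply exRc. intros z _. apply: (ex_derive_continuous (fun x => (1 - x^2/4)^(k*k))). auto_derive; auto.
    + apply exRc. intros z _. apply: (ex_derive_continuous (fun x => / (1 + (INR k * x / 2)^2))).
      auto_derive. nra.
    + intros x Hx. set s := x^2/4.
      have Hs : 0 <= s <= 1 by (rewrite /s; nra).
      have Hb := bern (k*k) s Hs.
      have E : (INR k * x / 2)^2 = INR (k*k) * s by (rewrite mult_INR /s; field).
      rewrite E. have HK := pos_INR (k*k).
      have Hd : 0 < 1 + INR (k * k) * s by nra.
      apply Rle_trans with ((1-s)^(k*k) * (1 + INR (k*k) * s) * / (1 + INR (k*k) * s)).
      right. field. lra.
      rewrite -{2}(Rmult_1_l (/ _)). apply Rmult_le_compat_r. left; apply Rinv_0_lt_compat; lra. exact Hb.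
  - have H := is_RInt_derive (fun x => 2 / INR k * atan (INR k * x / 2)) (fun x => / (1 + (INR k * x / 2)^2)) (-2) 2.
    rewrite (is_RInt_unique _ _ _ _ (H _ _)).
    + rewrite /minus /plus /opp /=.
      replace (INR k * 2 / 2) with (INR k) by field. replace (INR k * -2 / 2) with (- INR k) by field.
      rewrite atan_opp. have := atan_bound (INR k). have := PI_4. intros.
      apply Rle_trans with (2 / INR k * 4). 2: right; field; lra.
      replace (2 / INR k * atan (INR k) + - (2 / INR k * - atan (INR k))) with (2 / INR k * (2 * atan (INR k))) by (field; lra).
      apply Rmult_le_compat_l. apply Rlt_le, Rdiv_lt_0_compat; lra. lra.
    + intros x _. auto_derive. nra. field. split; [nra | lra].
    + intros x _. apply: (ex_derive_continuous (fun x => / (1 + (INR k * x / 2)^2))). auto_derive. nra.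
Qed.

Lemma ck_lower k : (1 <= k)%nat -> INR k / 8 <= ck k.
Proof.
  intros Hk. assert (Hk1 : 1 <= INR k) by (replace 1 with (INR 1) by (simpl; lra); apply le_INR; lia).
  have Hp := ck_int_pos k. have Hb := int_bound k Hk.
  unfold ck. replace (INR k / 8) with (/ (8 / INR k)) by (field; lra).
  apply Rinv_le_contravar; auto.
Qed.

Theorem lemma2 :
  (forall (n k : nat), (2 <= n)%nat -> (1 <= k)%nat ->
     (exists coef : nat -> R,
        coef (2 * (k * k) - 1)%nat = ak n k /\
        ak n k <> 0 /\
        (forall i : nat, Nat.Even i -> coef i = 0) /\
        (forall t : R, Pk n k t = sum_f_R0 (fun i => coef i * t ^ i) (2 * (k * k) - 1))) /\
     (forall t : R, -1 <= t <= 1 ->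
        Pk n k t = RInt (fun x => (trap n (t + x) + trap n (t - x)) * phik k x) 0 2)) /\
  (exists c0 : R, 0 < c0 /\
     forall (n k : nat), (2 <= n)%nat -> (1 <= k)%nat ->
     forall t : R,
       c0 * INR (fact (2 * (k * k) - 1)) * INR k ^ 3 / 4 ^ (k * k)
         <= Rabs (Derive_n (Pk n k) (2 * (k * k) - 1) t)).
Proof.
  split.
  - intros n k Hn Hk. split.
    + exists (coefP n k). apply part_i; auto.
    + intros t Ht. apply part_iii; auto.
  - exists (1/8). split; [lra|].
    intros n k Hn Hk t.
    destruct (part_i n k Hn Hk) as [E1 [_ [_ E4]]].
    rewrite (poly_Derive_n _ (coefP n k) (Pk n k) E4 t) E1.
    assert (Hm : 2 <= INR n) by (replace 2 with (INR 2) by (simpl; lra); apply le_INR; exact Hn).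
    assert (Hk1 : 1 <= INR k) by (replace 1 with (INR 1) by (simpl; lra); apply le_INR; lia).
    have Hc := ck_lower k Hk.
    have HF : 0 < INR (fact (2 * (k * k) - 1)) by (apply lt_0_INR, lt_O_fact).
    have HQ : 0 < 4 ^ (k*k) by (apply pow_lt; lra).
    set F := INR (fact (2 * (k * k) - 1)) in HF *.
    set Q := 4 ^ (k*k) in HQ *.
    have Hw : 1/2 <= 1 - 1 / INR n.
    { assert (1 / INR n <= 1/2). { unfold Rdiv; rewrite !Rmult_1_l; apply Rinv_le_contravar; lra. } lra. }
    set w := 1 - 1 / INR n in Hw *.
    have Hak : Rabs (ak n k) = 2 * ck k * INR (k*k) / Q * w.
    { rewrite /ak -/Q -/w Rmult_assoc Rabs_mult pow_1_abs Rmult_1_l Rabs_pos_eq //.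
      apply Rmult_le_pos; [|lra]. apply Rmult_le_pos; [|left; apply Rinv_0_lt_compat; lra].
      apply Rmult_le_pos; [|apply pos_INR]. have := ck_pos k; lra. }
    rewrite Rabs_mult Hak (Rabs_pos_eq F); [|lra].
    rewrite mult_INR.
    set c := ck k in Hc *. set x := INR k in Hk1 Hc *.
    have Hcw : x / 16 <= c * w by nra.
    have H3 : x^3 / 8 <= 2 * c * (x * x) * w.
    { have : x * x * (x / 16) <= x * x * (c * w) by (apply Rmult_le_compat_l; nra). nra. }
    apply Rle_trans with (F * (x^3/8) / Q). right. field. lra.
    apply Rle_trans with (F * (2 * c * (x * x) * w) / Q).
    { unfold Rdiv. apply Rmult_le_compat_r. left; apply Rinv_0_lt_compat; lra.
      apply Rmult_le_compat_l; lra. }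
    right. field. lra.
Qed.
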